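(* Let $m\in\mathbb Z_{\ge0}$, let $\lambda/\mu$ be an r-shape and $\mathbf a,\mathbf b$ column flags for it with conjugates $\mathbf a',\mathbf b'$. Write $\tau(k)=-k+1$, $\eta(k)=k-m$, $u_j=\max(1,a_j)$, $v_i=\min(m,b_i)$, and set $\alpha_i=\beta_i=0$ for $i\le0$. Then $$\mathsf g^{\mathbf a,\mathbf b}_{\lambda/\mu}(\mathbf x_m;\boldsymbol\alpha,\boldsymbol\beta)=\det\left[e_{\lambda'_i-i-\mu'_j+j}\left(\mathbf x_{u_j,v_i},\overline{\boldsymbol\alpha}_{\tau(b_i),\tau(a_j)},\boldsymbol\beta_{\eta(a_j),\eta(b_i)}\,/\,\overline{\boldsymbol\alpha}_{\eta(a'_j),\eta(b'_i)},\boldsymbol\beta_{\tau(b'_i),\tau(a'_j)}\right)\right]_{1\le i,j\le n}$$ for $n\ge\lambda_1$. In particular, if $\lambda/\mu$ is a usual skew shape and $a_i=-i+2$, $b_i=\lambda'_i+m-1$ for $i\in[n]$, then $\mathsf S^{\mathbf a,\mathbf b}_{\lambda/\mu}(\mathbf y/\mathbf z)|_g=\mathsf g^{\mathbf a,\mathbf b}_{\lambda/\mu}(\mathbf x_m;\boldsymbol\alpha,\boldsymbol\beta)=g_{\lambda/\mu}(\mathbf x_m;\boldsymbol\alpha,\boldsymbol\beta)$.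
   Context: Young diagrams in English notation; $\lambda'$ conjugate partition. An r-shape is $(\lambda/\mu,r)$ with shifted contents $c(i,j)=j-i+r-1+\lambda'_1$; a usual skew shape has $c(i,j)=j-i$. Column flags: for $n\ge\lambda_1$, $\mathbf a,\mathbf b\in\mathbb Z^n$ with $a_i-a_{i+1}\le\mu'_i-\mu'_{i+1}+1$, $b_i-b_{i+1}\le\lambda'_i-\lambda'_{i+1}+1$ whenever $\mu'_i<\lambda'_{i+1}$; conjugate flags $a'_i=a_i+c(\gamma_i)$, $b'_i=b_i+c(\delta_i)$ ($\gamma_i,\delta_i$ top and bottom cells of column $i$). For a sequence of variables $\mathbf w$, $\mathbf w_{p,q}=(w_p,\ldots,w_q)$ (empty if $p>q$), $\mathbf w_k=\mathbf w_{1,k}$, $\overline{\mathbf w}=(-w_i)$; commas between variable sets denote their union. $e_n(\mathbf x/\mathbf w)=\sum_{i=0}^n(-1)^{n-i}e_i(\mathbf x)h_{n-i}(\mathbf w)$ ($e_0=1$, $e_n=0$ for $n<0$). With $\mathbf y=(y_i)_{i\in\mathbb Z},\mathbf z=(z_i)_{i\in\mathbb Z}$: $\mathsf S^{\mathbf a,\mathbf b}_{\lambda/\mu}(\mathbf y/\mathbf z)=\det[e_{\lambda'_i-i-\mu'_j+j}(\mathbf y_{a_j,b_i}/\mathbf z_{a'_j,b'_i})]_{1\le i,j\le n}$. The $g$-specialization (for given $m$) substitutes $y_i\mapsto x_i$ ($i\in[m]$), $y_i\mapsto\beta_{i-m}$ ($i>m$), $y_i\mapsto-\alpha_{-i+1}$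 ($i\le0$), and $z_i\mapsto0$ ($i\in[m]$), $z_i\mapsto-\alpha_{i-m}$ ($i>m$), $z_i\mapsto\beta_{-i+1}$ ($i\le0$). The flagged dual Grothendieck enumerator is $\mathsf g^{\mathbf a,\mathbf b}_{\lambda/\mu}(\mathbf x_m;\boldsymbol\alpha,\boldsymbol\beta)=\mathsf S^{\mathbf a,\mathbf b}_{\lambda/\mu}(\mathbf y/\mathbf z)|_g$. The dual refined canonical stable Grothendieck polynomial is $g_{\lambda/\mu}(\mathbf x;\boldsymbol\alpha,\boldsymbol\beta)=\det[e_{\lambda'_i-i-\mu'_j+j}(\mathbf x,\overline{\boldsymbol\alpha}_{j-1},\boldsymbol\beta_{\lambda'_i-1}/\overline{\boldsymbol\alpha}_{i-1},\boldsymbol\beta_{\mu'_j})]_{1\le i,j\le n}$, $n\ge\lambda_1$; $g_{\lambda/\mu}(\mathbf x_m;\ldots)$ is this with $\mathbf x=(x_1,\ldots,x_m)$. *)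

(* Defs.v *)
From HB Require Import structures.
From mathcomp Require Import all_boot all_order all_algebra.
Set Implicit Arguments. Unset Strict Implicit. Unset Printing Implicit Defensive.
Import Order.TTheory GRing.Theory Num.Theory.
Local Open Scope ring_scope.

Section Defs.
Variable R : comRingType.

Fixpoint elemsym (s : seq R) (k : nat) : R :=
  match s with
  | [::] => (k == 0%N)%:R
  | x :: s' => elemsym s' k + (if k is k'.+1 then x * elemsym s' k' else 0)
  end.

Fixpoint homsym (s : seq R) (k : nat) : R :=
  match s with
  | [::] => (k == 0%N)%:R
  | x :: s' => \sum_(j < k.+1) x ^+ j * homsym s' (k - j)
  end.

Definition esuper (x w : seq R) (n : int) : R :=
  match n with
  | Posz n => \sum_(i < n.+1) (-1) ^+ (n - i) * elemsym x i * homsym w (n - i)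
  | Negz _ => 0
  end.

Definition wseg (w : int -> R) (p q : int) : seq R :=
  if p <= q then mkseq (fun k => w (p + k%:Z)) (absz (q - p + 1)) else [::].

Definition ext0 (w : nat -> R) (k : int) : R :=
  if 0 < k then w (absz k) else 0.

End Defs.

(* conjugate partition: lam'_i = #{parts >= i}  (i >= 1) *)
Definition conjp (lam : seq nat) (i : nat) : nat := count (fun p => i <= p)%N lam.

Definition is_partition (lam : seq nat) : bool := sorted geq lam.

Definition skew_shape (lam mu : seq nat) : Prop :=
  is_partition lam /\ is_partition mu /\ (forall i, nth 0%N mu i <= nth 0%N lam i)%N.

(* contents c(i,j) = j - i + c0; for an r-shape c0 = r - 1 + lam'_1,
   for a usual skew shape c0 = 0 *)
Definition content (c0 i j : int) : int := j - i + c0.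
Definition rshape_off (lam : seq nat) (r : int) : int := r - 1 + (conjp lam 1)%:Z.

(* column flags (1-based indices; only a_1..a_n, b_1..b_n matter) *)
Definition column_flags (lam mu : seq nat) (n : nat) (a b : nat -> int) : Prop :=
  (head 0%N lam <= n)%N /\
  forall i, (1 <= i < n)%N -> (conjp mu i < conjp lam i.+1)%N ->
    a i - a i.+1 <= (conjp mu i)%:Z - (conjp mu i.+1)%:Z + 1 /\
    b i - b i.+1 <= (conjp lam i)%:Z - (conjp lam i.+1)%:Z + 1.

(* conjugate flags: a'_j = a_j + c(gamma_j), gamma_j = (mu'_j + 1, j) top cell;
   b'_i = b_i + c(delta_i), delta_i = (lam'_i, i) bottom cell *)
Definition aconj (mu : seq nat) (c0 : int) (a : nat -> int) (j : nat) : int :=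
  a j + content c0 ((conjp mu j)%:Z + 1) j%:Z.
Definition bconj (lam : seq nat) (c0 : int) (b : nat -> int) (i : nat) : int :=
  b i + content c0 (conjp lam i)%:Z i%:Z.

Definition dind (lam mu : seq nat) (i j : nat) : int :=
  (conjp lam i)%:Z - i%:Z - (conjp mu j)%:Z + j%:Z.

Definition Sflag (R : comRingType) (lam mu : seq nat) (c0 : int) (n : nat)
    (a b : nat -> int) (y z : int -> R) : R :=
  \det (\matrix_(i < n, j < n)
    esuper (wseg y (a j.+1) (b i.+1))
           (wseg z (aconj mu c0 a j.+1) (bconj lam c0 b i.+1))
           (dind lam mu i.+1 j.+1)).

Definition gy (R : comRingType) (m : nat) (x alpha beta : nat -> R) (k : int) : R :=
  if (1 <= k) && (k <= m%:Z) then x (absz k)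
  else if m%:Z < k then beta (absz (k - m%:Z)) else - alpha (absz (1 - k)).
Definition gz (R : comRingType) (m : nat) (alpha beta : nat -> R) (k : int) : R :=
  if (1 <= k) && (k <= m%:Z) then 0
  else if m%:Z < k then - alpha (absz (k - m%:Z)) else beta (absz (1 - k)).

Definition gflag (R : comRingType) (lam mu : seq nat) (c0 : int) (n : nat)
    (a b : nat -> int) (m : nat) (x alpha beta : nat -> R) : R :=
  Sflag lam mu c0 n a b (gy m x alpha beta) (gz m alpha beta).

Definition gdual (R : comRingType) (lam mu : seq nat) (n : nat) (m : nat)
    (x alpha beta : nat -> R) : R :=
  \det (\matrix_(i < n, j < n)
    esuper (wseg (ext0 x) 1 m%:Z
              ++ wseg (fun k => - ext0 alpha k) 1 (j.+1%:Z - 1)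
              ++ wseg (ext0 beta) 1 ((conjp lam i.+1)%:Z - 1))
           (wseg (fun k => - ext0 alpha k) 1 (i.+1%:Z - 1)
              ++ wseg (ext0 beta) 1 (conjp mu j.+1)%:Z)
           (dind lam mu i.+1 j.+1)).

Definition prop35_rhs (R : comRingType) (lam mu : seq nat) (c0 : int) (n : nat)
    (a b : nat -> int) (m : nat) (x alpha beta : nat -> R) : R :=
  let tau (k : int) : int := 1 - k in
  let eta (k : int) : int := k - m%:Z in
  let abar := fun k => - ext0 alpha k in
  let bet := ext0 beta in
  \det (\matrix_(i < n, j < n)
    let aj := a j.+1 in let bi := b i.+1 in
    let a'j := aconj mu c0 a j.+1 in let b'i := bconj lam c0 b i.+1 in
    esuper (wseg (ext0 x) (Num.max 1 aj) (Num.min m%:Z bi)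
              ++ wseg abar (tau bi) (tau aj)
              ++ wseg bet (eta aj) (eta bi))
           (wseg abar (eta a'j) (eta b'i)
              ++ wseg bet (tau b'i) (tau a'j))
           (dind lam mu i.+1 j.+1)).

(* Main.v *)
Require Import Defs.
From HB Require Import structures.
From mathcomp Require Import all_boot all_order all_algebra.
From mathcomp Require Import zify fingroup perm.
Import Order.TTheory GRing.Theory Num.Theory.
Local Open Scope ring_scope.

Lemma prod_mid (T : comRingType) (g : nat -> T) N d n :
  (d + n <= N)%N -> (forall i, ((i < d)%N || (d + n <= i)%N) -> g i = 1) ->
  \prod_(i < N) g i = \prod_(i < n) g (i + d)%N.
Proof.
move=> hN hg.
rewrite -(big_mkord xpredT) (@big_cat_nat _ _ _ d 0 N _ _ (leq0n d) (leq_trans (leq_addr n d) hN)) /=.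
rewrite (@big_cat_nat _ _ _ (d+n) d N _ _ (leq_addr n d) hN) /=.
rewrite [X in X * _]big1_seq ?mul1r; last first.
  by move=> i /andP[_]; rewrite mem_index_iota => /andP[_ h]; apply: hg; rewrite h.
rewrite [X in _ * X]big1_seq ?mulr1; last first.
  by move=> i /andP[_]; rewrite mem_index_iota => /andP[h _]; apply: hg; rewrite h orbT.
rewrite -{1}(add0n d) big_addn addKn big_mkord.
by [].
Qed.

Section S.
Variable R : comRingType.
Implicit Types (F : R -> {poly R}) (w : int -> R).

Definition wprod F w (p q : int) := \prod_(x <- wseg w p q) F x.

Definition win (G : int -> {poly R}) (L : int) (N : nat) :=
  \prod_(i < N) G (L + i%:Z).

Lemma wprod_win F w p q L N : (p <= q -> L <= p /\ q < L + N%:Z) ->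
  wprod F w p q = win (fun k => if (p <= k) && (k <= q) then F (w k) else 1) L N.
Proof.
move=> H; rewrite /wprod /wseg /win; case: ifP => pq; last first.
  rewrite big_nil big1 // => i _; rewrite ifF //.
  by apply/negbTE/negP => /andP[h1 h2]; move/negbT: pq; rewrite -ltNge; lia.
have [Lp qN] := H pq.
rewrite (@prod_mid _ (fun i : nat => if (p <= L + i%:Z) && (L + i%:Z <= q) then F (w (L + i%:Z)) else 1) N (absz (p - L)) (absz (q - p + 1))); last 2 first.
- lia.
- by move=> i hi; rewrite ifF //; apply/negbTE/negP => /andP[h1 h2]; lia.
rewrite /mkseq big_map -[in LHS](subn0 (absz (q - p + 1))) -/(index_iota 0 _) big_mkord.
apply: eq_bigr => i _; rewrite ifT; last (case: i => i hi /=; lia).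
by congr (F (w _)); case: i => i hi /=; lia.
Qed.

Lemma win_rev G L N c :
  win G L N = win (fun k => G (c - k)) (c - (L + N%:Z - 1)) N.
Proof.
rewrite /win (reindex_inj rev_ord_inj) /=.
by apply: eq_bigr => i _; congr (G _); case: i => i hi /=; lia.
Qed.

Lemma win_shift G L N c :
  win G L N = win (fun k => G (k + c)) (L - c) N.
Proof. by rewrite /win; apply: eq_bigr => i _; congr (G _); lia. Qed.

Lemma win_mul G1 G2 L N : win G1 L N * win G2 L N = win (fun k => G1 k * G2 k) L N.
Proof. by rewrite /win -big_split. Qed.

Lemma win_ext G1 G2 L N : (forall k, G1 k = G2 k) -> win G1 L N = win G2 L N.
Proof. by move=> h; rewrite /win; apply: eq_bigr => i _; apply: h. Qed.


Definition Fe (c : R) : {poly R} := 1 + c *: 'X.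
Definition Fh (N : nat) (c : R) : {poly R} := \poly_(j < N) c ^+ j.

Lemma Fe0 : Fe 0 = 1. Proof. by rewrite /Fe scale0r addr0. Qed.
Lemma Fh0 N : (0 < N)%N -> Fh N 0 = 1.
Proof.
move=> hN; apply/polyP => j; rewrite coef_poly coef1 expr0n.
by case: j => [|j] /=; rewrite ?hN //; case: ifP.
Qed.

Lemma elemsymE s k : elemsym s k = (\prod_(x <- s) Fe x)`_k.
Proof.
elim: s k => [|x s IH] k /=; first by rewrite big_nil coef1.
rewrite big_cons /Fe mulrDl mul1r -scalerAl coefD coefZ coefXM IH.
by case: k => [|k] /=; rewrite ?mulr0 ?addr0 ?IH.
Qed.

Lemma homsymE s k N : (k < N)%N -> homsym s k = (\prod_(x <- s) Fh N x)`_k.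
Proof.
elim: s k => [|x s IH] k hk /=; first by rewrite big_nil coef1.
rewrite big_cons coefM; apply: eq_bigr => j _.
rewrite IH; last by apply: leq_ltn_trans hk; apply: leq_subr.
rewrite /Fh coef_poly ifT //; apply: leq_ltn_trans hk.
by case: j => j /=; rewrite ltnS.
Qed.

Definition equiv (s t : seq R) := forall F : R -> {poly R}, F 0 = 1 ->
  \prod_(x <- s) F x = \prod_(x <- t) F x.

Lemma esuper_equiv s t s' t' d : equiv s t -> equiv s' t' ->
  esuper s s' d = esuper t t' d.
Proof.
move=> h h'; case: d => // d /=; apply: eq_bigr => i _.
rewrite !elemsymE (h _ Fe0) (homsymE _ _ _ (ltnSn (d - i))) (homsymE t' _ _ (ltnSn (d - i))).
by rewrite (h' _ (Fh0 _ (ltn0Sn _))).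
Qed.


Variables (m : nat) (x alpha beta : nat -> R).
Let abar := fun k => - ext0 alpha k.

Lemma ylist F (F0 : F 0 = 1) a b :
  wprod F (gy m x alpha beta) a b =
  wprod F (ext0 x) (Num.max 1 a) (Num.min m%:Z b) *
  wprod F (fun k => - ext0 alpha k) (1 - b) (1 - a) *
  wprod F (ext0 beta) (a - m%:Z) (b - m%:Z).
Proof.
case: (lerP a b) => hab; last first.
  rewrite /wprod /wseg !ifF ?big_nil ?mulr1 //; apply/negbTE; rewrite -ltNge; lia.
pose N := absz (b - a + 1).
rewrite (wprod_win _ _ _ _ a N); last lia.
rewrite (wprod_win _ _ _ _ a N); last lia.
rewrite (wprod_win _ _ _ _ (1 - b) N); last lia.
rewrite (wprod_win _ _ _ _ (a - m%:Z) N); last lia.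
rewrite (win_rev _ (1 - b) N 1) (win_shift _ (a - m%:Z) N (- m%:Z)).
have -> : 1 - (1 - b + N%:Z - 1) = a by lia.
have -> : a - m%:Z - - m%:Z = a by lia.
rewrite !win_mul; apply: win_ext => k.
rewrite /gy /ext0.
repeat (case: ifP => ?); rewrite ?oppr0 ?F0 ?mul1r ?mulr1 //; try lia.
Qed.

Lemma zlist F (F0 : F 0 = 1) a b :
  wprod F (gz m alpha beta) a b =
  wprod F (fun k => - ext0 alpha k) (a - m%:Z) (b - m%:Z) *
  wprod F (ext0 beta) (1 - b) (1 - a).
Proof.
case: (lerP a b) => hab; last first.
  rewrite /wprod /wseg !ifF ?big_nil ?mulr1 //; apply/negbTE; rewrite -ltNge; lia.
pose N := absz (b - a + 1).
rewrite (wprod_win _ _ _ _ a N); last lia.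
rewrite (wprod_win _ _ _ _ (a - m%:Z) N); last lia.
rewrite (wprod_win _ _ _ _ (1 - b) N); last lia.
rewrite (win_rev _ (1 - b) N 1) (win_shift _ (a - m%:Z) N (- m%:Z)).
have -> : 1 - (1 - b + N%:Z - 1) = a by lia.
have -> : a - m%:Z - - m%:Z = a by lia.
rewrite !win_mul; apply: win_ext => k.
rewrite /gz /ext0.
repeat (case: ifP => ?); rewrite ?oppr0 ?F0 ?mul1r ?mulr1 //; try lia.
Qed.

Lemma wprod_prefix F (F0 : F 0 = 1) w p q :
  p <= 1 -> (forall k, k <= 0 -> w k = 0) -> wprod F w p q = wprod F w 1 q.
Proof.
move=> hp hw.
rewrite (wprod_win _ _ _ _ p (absz (q - p + 1))); last lia.
rewrite (wprod_win _ _ _ _ p (absz (q - p + 1))); last lia.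
apply: win_ext => k; case: ifP => h1; case: ifP => h2 //; try lia.
by rewrite hw ?F0 //; lia.
Qed.

End S.
Arguments wprod {R}.
Arguments ylist {R} m x alpha beta {F} F0 a b.
Arguments zlist {R} m alpha beta {F} F0 a b.
Arguments wprod_prefix {R F} F0 w p q.
Lemma perm_fix n (s : 'S_n) K : (forall i : 'I_n, (K <= i)%N -> (i <= s i)%N) ->
  forall i : 'I_n, (K <= i)%N -> s i = i.
Proof.
move=> H.
suff h : forall t (i : 'I_n), (n - i <= t)%N -> (K <= i)%N -> s i = i.
  by move=> i; apply: (h n); rewrite leq_subr.
elim=> [|t IH] i hi hK.
  by have := ltn_ord i; lia.
have h1 := H i hK.
case: (ltnP i (s i)) => h2; last by apply/val_inj/eqP; rewrite eqn_leq h1 h2.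
have e : s (s i) = s i.
  by apply: IH; [have := ltn_ord (s i); lia | lia].
by apply: (perm_inj e).
Qed.

Lemma det_tail (R : comRingType) n (A B : 'M[R]_n) (K : nat) :
 (forall (i j : 'I_n), (i < K)%N -> A i j = B i j) ->
 (forall (i j : 'I_n), (K <= i)%N -> (j < i)%N -> A i j = 0 /\ B i j = 0) ->
 (forall i : 'I_n, (K <= i)%N -> A i i = 1 /\ B i i = 1) -> \det A = \det B.
Proof.
move=> hA hz h1; rewrite /determinant; apply: eq_bigr => s _; congr (_ * _).
case: (pickP [pred i : 'I_n | (K <= i)%N && (s i < i)%N]) => [i /andP[hK hlt] | hno].
  rewrite (bigD1 i) //= [RHS](bigD1 i) //=.
  by have [-> ->] := hz i (s i) hK hlt; rewrite !mul0r.
have hfix : forall i : 'I_n, (K <= i)%N -> s i = i.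
  apply: perm_fix => i hK; have := hno i; rewrite /= hK /= => /negbT.
  by rewrite -leqNgt.
apply: eq_bigr => i _; case: (ltnP i K) => hi; first by apply: hA.
by rewrite hfix //; have [-> ->] := h1 i hi.
Qed.

Lemma elemsym0 (R : comRingType) (s : seq R) : elemsym s 0 = 1.
Proof. by elim: s => //= c s ->; rewrite addr0. Qed.

Lemma homsym0 (R : comRingType) (s : seq R) : homsym s 0 = 1.
Proof. by elim: s => //= c s IH; rewrite big_ord1 expr0 mul1r subn0. Qed.

Lemma esuper_neg (R : comRingType) (s t : seq R) d : d < 0 -> esuper s t d = 0.
Proof. by case: d. Qed.

Lemma esuper_zero (R : comRingType) (s t : seq R) d : d = 0 -> esuper s t d = 1.
Proof.
by move=> ->; rewrite /= big_ord1 expr0 mul1r elemsym0 homsym0 mul1r.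
Qed.

Lemma wprod_pre (R : comRingType) F (F0 : F 0 = 1) (w : int -> R) p q q' :
  p <= 1 -> (forall k, k <= 0 -> w k = 0) -> q = q' -> wprod F w p q = wprod F w 1 q'.
Proof. by move=> h1 h2 <-; apply: wprod_prefix. Qed.

Lemma wprod_eqb (R : comRingType) F (w : int -> R) p q p' q' :
  p = p' -> q = q' -> wprod F w p q = wprod F w p' q'.
Proof. by move=> -> ->. Qed.

Lemma ext0_le0 (R : comRingType) (w : nat -> R) k : k <= 0 -> ext0 w k = 0.
Proof. by move=> h; rewrite /ext0 ifF //; apply/negbTE; rewrite -leNgt. Qed.

Lemma nabar_le0 (R : comRingType) (w : nat -> R) k : k <= 0 -> (fun k => - ext0 w k) k = 0.
Proof. by move=> h /=; rewrite ext0_le0 ?oppr0. Qed.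

Lemma conjp_big lam k : is_partition lam -> (head 0%N lam < k)%N -> conjp lam k = 0%N.
Proof.
case: lam => [|h t] //= hs hk.
have ha : all (geq h) t by apply: (order_path_min _ hs) => u v w /= h1 h2; apply: leq_trans h2 h1.
rewrite /conjp /= leqNgt hk /=; apply/eqP; rewrite -leqn0 leqNgt -has_count.
apply/hasPn => p hp /=; rewrite -ltnNge; move/allP: ha => /(_ p hp) /= hph.
by apply: leq_ltn_trans hph hk.
Qed.

Lemma conjp_pos lam k : (0 < k)%N -> (k <= head 0%N lam)%N -> (0 < conjp lam k)%N.
Proof.
case: lam => [|h t] /= hk hkh; first by move: hk; rewrite ltnNge hkh.
by rewrite /conjp /= hkh.
Qed.

Theorem proposition3p5 (R : comRingType) (m : nat) (x alpha beta : nat -> R) :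
  (forall (lam mu : seq nat) (r : int) (n : nat) (a b : nat -> int),
     skew_shape lam mu ->
     column_flags lam mu n a b ->
     gflag lam mu (rshape_off lam r) n a b m x alpha beta
     = prop35_rhs lam mu (rshape_off lam r) n a b m x alpha beta)
  /\
  (forall (lam mu : seq nat) (n : nat) (a b : nat -> int),
     skew_shape lam mu ->
     (head 0%N lam <= n)%N ->
     (forall i : nat, (1 <= i <= n)%N ->
        a i = 2 - i%:Z /\ b i = (conjp lam i)%:Z + m%:Z - 1) ->
     Sflag lam mu 0 n a b (gy m x alpha beta) (gz m alpha beta)
       = gflag lam mu 0 n a b m x alpha beta
     /\ gflag lam mu 0 n a b m x alpha beta = gdual lam mu n m x alpha beta).
Proof.
split.
  move=> lam mu r n a b _ _; rewrite /gflag /Sflag /prop35_rhs.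
  congr (\det _); apply/matrixP => i j; rewrite !mxE /=.
  apply: esuper_equiv => F F0.
    by have := ylist m x alpha beta F0 (a j.+1) (b i.+1); rewrite /wprod => ->; rewrite !big_cat /=; rewrite -mulrA.
  apply: etrans; first exact: (zlist m alpha beta F0 _ _).
  by rewrite /wprod big_cat.
move=> lam mu n a b [hl [hm hlm]] hn hab; split; first by [].
rewrite /gflag /Sflag /gdual.
have hmu : (head 0%N mu <= head 0%N lam)%N by rewrite -!nth0.
apply: (@det_tail _ _ _ _ (head 0%N lam)).
- move=> i j hi; rewrite !mxE.
  have [ha _] := hab j.+1 (ltn_ord j).
  have [_ hb] := hab i.+1 (ltn_ord i).
  have hl1 := @conjp_pos lam i.+1 (ltn0Sn i) hi.
  rewrite /aconj /bconj /content ha hb.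
  apply: esuper_equiv => F F0.
    have := ylist m x alpha beta F0 (2 - j.+1%:Z) ((conjp lam i.+1)%:Z + m%:Z - 1).
    rewrite /wprod => ->; rewrite !big_cat /= mulrA.
    congr (_ * _ * _).
    + by apply: wprod_eqb; lia.
    + apply: wprod_pre => //; [lia | exact: nabar_le0 | lia].
    + apply: wprod_pre => //; [lia | exact: ext0_le0 | lia].
  have := zlist m alpha beta F0 (2 - j.+1%:Z + (j.+1%:Z - ((conjp mu j.+1)%:Z + 1) + 0))
     ((conjp lam i.+1)%:Z + m%:Z - 1 + (i.+1%:Z - (conjp lam i.+1)%:Z + 0)).
  rewrite /wprod => ->; rewrite !big_cat /=.
  congr (_ * _).
  + apply: wprod_pre => //; [lia | exact: nabar_le0 | lia].
  + apply: wprod_pre => //; [lia | exact: ext0_le0 | lia].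
- move=> i j hi hji; rewrite !mxE.
  have e : conjp lam i.+1 = 0%N by apply: conjp_big.
  by rewrite !esuper_neg // /dind e; lia.
- move=> i hi; rewrite !mxE.
  have e : conjp lam i.+1 = 0%N by apply: conjp_big.
  have e' : conjp mu i.+1 = 0%N by apply: conjp_big => //; lia.
  by rewrite !esuper_zero // /dind e e'; lia.
Qed.
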